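(* Let $x\in\Gamma$ be such that $g$ is $C^1$ near $x$, let $x^*\in\mathbb R^n$, let $\lambda\in\Lambda(x,x^* )$ and let $u\in K_\Gamma(x,x^* )$. Then $\langle\mathcal H(x,\lambda)u,u\rangle\ge0$.
   Context: Setting. Let $n,m\ge1$ and let $\mathcal Q:=\{(q_0,q_r)\in\mathbb R\times\mathbb R^m:\|q_r\|\le q_0\}$ be the second-order cone. For $q=(q_0,q_r)\in\mathbb R^{1+m}$ write $\hat q:=(-q_0,q_r)$, and let $\mathcal Q^*:=\{\hat q: q\in\mathcal Q\}=\{(q_0,q_r):\|q_r\|\le-q_0\}$. The normal cone to $\mathcal Q$ at $q\in\mathcal Q$ is $N_{\mathcal Q}(q)=\mathcal Q^*$ if $q=0$, $N_{\mathcal Q}(q)=\{0\}$ if $q\in\operatorname{int}\mathcal Q$, and $N_{\mathcal Q}(q)=\{\alpha\hat q:\alpha\ge0\}$ if $q\in\operatorname{bd}\mathcal Q\setminus\{0\}$. $\Gamma:=\{x\in\mathbb R^n: g(x)\in\mathcal Q\}$ with $g=(g_0,g_r):\mathbb R^n\to\mathbb R\times\mathbb R^m$; $\nabla g(x)$ is the Jacobian and $\nabla g(x)^*$ its transpose. $T_\Gamma(x)$ is the Bouligand tangent cone $\{v:\exists t_k\downarrow0,\ v_k\to v,\ x+t_kv_k\in\Gamma\}$. For $x\in\Gamma$, $x^*\in\mathbb R^n$: $\Lambda(x,x^* ):=\{\lambda\in N_{\mathcal Q}(g(x)):\nabla g(x)^*\lambda=x^*\}$; the critical cone is $K_\Gamma(x,x^*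 ):=\{u\in T_\Gamma(x):\langle x^*,u\rangle=0\}$. The curvature mapping is $\mathcal H(x,\lambda):=\frac{-\lambda_0}{g_0(x)}\big(\nabla g_r(x)^*\nabla g_r(x)-\nabla g_0(x)^*\nabla g_0(x)\big)$ if $g(x)\in\operatorname{bd}\mathcal Q\setminus\{0\}$ and $\mathcal H(x,\lambda):=0$ otherwise. *)

(* Defs.v *)
From Stdlib Require Import Reals ClassicalEpsilon.
From mathcomp Require Import ssreflect ssrfun ssrbool eqtype ssrnat seq fintype bigop.
Set Implicit Arguments. Unset Strict Implicit.
Open Scope R_scope.

Definition Vec (n : nat) := 'I_n -> R.

Definition vsum (n : nat) (f : 'I_n -> R) : R := \big[Rplus/0]_(i < n) f i.
Definition dot (n : nat) (u v : Vec n) : R := vsum (fun i => u i * v i).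
Definition vnorm (n : nat) (u : Vec n) : R := sqrt (dot u u).
Definition vadd (n : nat) (u v : Vec n) : Vec n := fun i => u i + v i.
Definition vsub (n : nat) (u v : Vec n) : Vec n := fun i => u i - v i.
Definition vscal (n : nat) (a : R) (u : Vec n) : Vec n := fun i => a * u i.

Definition Pt (m : nat) := (R * Vec m)%type.

Definition inQ (m : nat) (q : Pt m) : Prop := vnorm (snd q) <= fst q.
Definition inQdual (m : nat) (q : Pt m) : Prop := vnorm (snd q) <= - fst q.
Definition intQ (m : nat) (q : Pt m) : Prop := vnorm (snd q) < fst q.
Definition bdQ (m : nat) (q : Pt m) : Prop := vnorm (snd q) = fst q.
Definition isZero (m : nat) (q : Pt m) : Prop := fst q = 0 /\ forall j, snd q j = 0.
Definition hat (m : nat) (q : Pt m) : Pt m := (- fst q, snd q).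

Definition NQ (m : nat) (q lam : Pt m) : Prop :=
  (isZero q /\ inQdual lam)
  \/ (intQ q /\ isZero lam)
  \/ (bdQ q /\ ~ isZero q /\
      exists alpha, 0 <= alpha /\ fst lam = alpha * fst (hat q)
                    /\ forall j, snd lam j = alpha * snd (hat q) j).

Definition inGamma (n m : nat) (g : Vec n -> Pt m) (x : Vec n) : Prop := inQ (g x).

Definition frechet_at (n : nat) (f : Vec n -> R) (y G : Vec n) : Prop :=
  forall eps, 0 < eps -> exists delta, 0 < delta /\
    forall h : Vec n, vnorm h < delta ->
      Rabs (f (vadd y h) - f y - dot G h) <= eps * vnorm h.

Definition vcont_at (n : nat) (F : Vec n -> Vec n) (y : Vec n) : Prop :=
  forall eps, 0 < eps -> exists delta, 0 < delta /\
    forall z : Vec n, vnorm (vsub z y) < delta -> vnorm (vsub (F z) (F y)) < eps.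

(* g is C^1 near x, with J0 y = gradient of g0 at y and Jr y j = gradient
   of the j-th component of gr at y (rows of the Jacobian). *)
Definition C1_near (n m : nat) (g : Vec n -> Pt m)
    (J0 : Vec n -> Vec n) (Jr : Vec n -> 'I_m -> Vec n) (x : Vec n) : Prop :=
  exists r, 0 < r /\ forall y : Vec n, vnorm (vsub y x) < r ->
    frechet_at (fun z => fst (g z)) y (J0 y) /\ vcont_at J0 y /\
    forall j : 'I_m, frechet_at (fun z => snd (g z) j) y (Jr y j)
                     /\ vcont_at (fun z => Jr z j) y.

Definition jac_apply (n m : nat) (J0 : Vec n) (Jr : 'I_m -> Vec n) (u : Vec n) : Pt m :=
  (dot J0 u, fun j => dot (Jr j) u).
Definition jacT_apply (n m : nat) (J0 : Vec n) (Jr : 'I_m -> Vec n) (lam : Pt m) : Vec n :=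
  fun i => fst lam * J0 i + vsum (fun j => snd lam j * Jr j i).

Definition vconv (n : nat) (vk : nat -> Vec n) (v : Vec n) : Prop :=
  forall eps, 0 < eps -> exists N, forall k, (N <= k)%nat -> vnorm (vsub (vk k) v) < eps.
Definition TGamma (n m : nat) (g : Vec n -> Pt m) (x v : Vec n) : Prop :=
  exists (t : nat -> R) (vk : nat -> Vec n),
    (forall k, 0 < t k) /\ Un_cv t 0 /\ vconv vk v /\
    forall k, inGamma g (vadd x (vscal (t k) (vk k))).

Definition Lambda (n m : nat) (g : Vec n -> Pt m) (J0 : Vec n) (Jr : 'I_m -> Vec n)
    (x xs : Vec n) (lam : Pt m) : Prop :=
  NQ (g x) lam /\ forall i, jacT_apply J0 Jr lam i = xs i.

Definition KGamma (n m : nat) (g : Vec n -> Pt m) (x xs u : Vec n) : Prop :=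
  TGamma g x u /\ dot xs u = 0.

(* Curvature mapping H(x, lam) as a linear map R^n -> R^n:
   (-lam0/g0(x)) (grad gr^T grad gr - grad g0^T grad g0) if g(x) in bd Q \ {0},
   and 0 otherwise. *)
Definition Hcurv (n m : nat) (g : Vec n -> Pt m) (J0 : Vec n) (Jr : 'I_m -> Vec n)
    (x : Vec n) (lam : Pt m) : Vec n -> Vec n :=
  fun u i =>
    if excluded_middle_informative (bdQ (g x) /\ ~ isZero (g x)) then
      (- fst lam / fst (g x)) *
        (vsum (fun j => Jr j i * dot (Jr j) u) - J0 i * dot J0 u)
    else 0.

(* Main.v *)
From HB Require Import structures.
Require Import Defs.
From Stdlib Require Import Reals Lra Psatz ClassicalEpsilon.
From mathcomp Require Import ssreflect ssrfun ssrbool fintype bigop.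
Open Scope R_scope.
Lemma Rplus_assoc' : associative Rplus. Proof. move=> *; ring. Qed.
HB.instance Definition _ := Monoid.isComLaw.Build R 0 Rplus Rplus_assoc' Rplus_comm Rplus_0_l.

Lemma vsum_ext {n} {f g : 'I_n -> R} : (forall i, f i = g i) -> vsum f = vsum g.
Proof. move=> H; rewrite /vsum; apply: eq_bigr => i _; exact: H. Qed.

Lemma vsum_add n (f g : 'I_n -> R) : vsum (fun i => f i + g i) = vsum f + vsum g.
Proof. by rewrite /vsum big_split. Qed.

Lemma vsum_scal n c (f : 'I_n -> R) : vsum (fun i => c * f i) = c * vsum f.
Proof.
rewrite /vsum; apply: (big_ind2 (fun a b => a = c * b)).
- by rewrite Rmult_0_r.
- by move=> x1 x2 y1 y2 -> ->; rewrite Rmult_plus_distr_l.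
- by [].
Qed.

Lemma vsum_ge0 n (f : 'I_n -> R) : (forall i, 0 <= f i) -> 0 <= vsum f.
Proof.
move=> H; rewrite /vsum; apply: (big_ind (fun a => 0 <= a)).
- lra.
- move=> x y; lra.
- move=> i _; exact: H.
Qed.

Lemma vsum_swap n m (f : 'I_n -> 'I_m -> R) :
  vsum (fun i => vsum (fun j => f i j)) = vsum (fun j => vsum (fun i => f i j)).
Proof. rewrite /vsum; exact: exchange_big. Qed.

Theorem lemma4p1 (n m : nat) (g : Vec n -> Pt m)
    (J0 : Vec n -> Vec n) (Jr : Vec n -> 'I_m -> Vec n)
    (x xs u : Vec n) (lam : Pt m) :
  (1 <= n)%nat -> (1 <= m)%nat ->
  inGamma g x ->
  C1_near g J0 Jr x ->
  Lambda g (J0 x) (Jr x) x xs lam ->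
  KGamma g x xs u ->
  0 <= dot (Hcurv g (J0 x) (Jr x) x lam u) u.
Proof.
move=> _ _ _ _ [HN Hxs] [_ Hcrit].
rewrite /Hcurv; case: excluded_middle_informative => Hb; rewrite /=; last first.
  rewrite /dot (_ : vsum _ = 0 * vsum u); first lra.
  rewrite -vsum_scal; apply: vsum_ext => i; ring.
set q0 := fst (g x). set qr := snd (g x).
set a := dot (J0 x) u. set b := fun j => dot (Jr x j) u.
set c := - fst lam / q0.
have HH : dot (fun i => c * (vsum (fun j => Jr x j i * dot (Jr x j) u) - J0 x i * a)) u
   = c * (vsum (fun j => b j * b j) - a * a).
  rewrite {1}/dot.
  transitivity (vsum (fun i => c * (vsum (fun j => b j * (Jr x j i * u i)) + (- a) * (J0 x i * u i)))).
    apply: vsum_ext => i.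
    rewrite (_ : vsum (fun j => b j * (Jr x j i * u i)) = vsum (fun j => Jr x j i * dot (Jr x j) u) * u i); first ring.
    rewrite Rmult_comm -vsum_scal; apply: vsum_ext => j; rewrite /b; ring.
  rewrite vsum_scal vsum_add vsum_scal vsum_swap.
  rewrite (_ : vsum (fun j => vsum (fun i => b j * (Jr x j i * u i))) = vsum (fun j => b j * b j)).
    rewrite -/(dot (J0 x) u) -/a; ring.
  apply: vsum_ext => j; by rewrite vsum_scal.
rewrite HH.
have Hq0 : 0 <= q0 by rewrite /q0 -(proj1 Hb); apply: sqrt_pos.
case: HN => [[Hz _]|[[Hi _]|[_ [_ [al [Hal [Hl0 Hlj]]]]]]]; first by case: (proj2 Hb).
  rewrite /intQ (proj1 Hb) in Hi; lra.
move: Hl0; rewrite /hat /= -/q0 => Hl0.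
have Hlj' : forall j, snd lam j = al * qr j by move=> j; rewrite Hlj.
have HS : vsum (fun j => qr j * qr j) = q0 * q0.
  have Hv : sqrt (dot qr qr) = q0 := proj1 Hb.
  rewrite -Hv sqrt_sqrt //; apply: vsum_ge0 => j; exact: Rle_0_sqr.
have Hc0 : fst lam * a + vsum (fun j => snd lam j * b j) = 0.
  rewrite -Hcrit /dot (vsum_ext (f := fun i => xs i * u i)
     (g := fun i => fst lam * (J0 x i * u i) + vsum (fun j => snd lam j * (Jr x j i * u i)))); last first.
    move=> i; rewrite -Hxs /jacT_apply Rmult_plus_distr_r; congr (_ + _); first ring.
    rewrite Rmult_comm -vsum_scal; apply: vsum_ext => j; ring.
  rewrite vsum_add vsum_scal vsum_swap -/(dot _ _) -/a; congr (_ + _).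
  apply: vsum_ext => j; by rewrite vsum_scal.
rewrite (vsum_ext (f := fun j => snd lam j * b j) (g := fun j => al * (qr j * b j))) in Hc0;
  last by move=> j; rewrite Hlj'; ring.
rewrite vsum_scal Hl0 in Hc0.
case: (Req_dec q0 0) => Hq.
  have -> : c = 0 by rewrite /c Hl0 Hq /Rdiv Rinv_0; ring.
  lra.
have Hcal : c = al by rewrite /c Hl0 /Rdiv; field.
rewrite Hcal.
have Hsq : 0 <= vsum (fun j => (q0 * b j - a * qr j) * (q0 * b j - a * qr j)).
  apply: vsum_ge0 => j; exact: Rle_0_sqr.
rewrite (vsum_ext (g := fun j => (q0 * q0) * (b j * b j) + ((- 2 * a * q0) * (qr j * b j) + (a * a) * (qr j * qr j)))) in Hsq; last by move=> j; ring.
rewrite vsum_add vsum_add !vsum_scal HS in Hsq.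
set B := vsum (fun j => b j * b j) in Hsq *.
set P := vsum (fun j => qr j * b j) in Hc0 Hsq.
case: (Req_dec al 0) => Ha; first by rewrite Ha; lra.
have HP : P = q0 * a by nra.
rewrite HP in Hsq.
have Hq2 : 0 < q0 * q0 by nra.
have : 0 <= q0 * q0 * (B - a * a) by nra.
move=> H1. have : 0 <= B - a * a by nra.
nra.
Qed.
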